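(* Let $i\ge1$ and let $(a_j)_{j\ge1}$ satisfy $0<a_j\le Aj$ for some $A>0$. Let $y_0\in\mathcal X^+_{1,i}$ with $y_{i,0}>0$, and let $y$ be the solution of $dy/dt=F(y)$, $y(0)=y_0$. Then there exist $t_*\in(0,\infty]$ and $t_{*,1}\in[t_*,\infty]$ such that: - $y_i(t)>0$ for $t\in[0,t_* )$, and $y_i(t_* )=0$ if $t_*<\infty$; - $y_{ki}(t)>0$ for $t\in(0,t_* )$ and all $k\ge2$; - $y_j(t)\ge0$ for $t\in[0,t_* )$ and $j\ge i+1$; - $y_j(t)>0$ for $t\in[0,t_* )$ whenever $j\ge i+1$ and $y_{j,0}>0$; - $\frac{dy_i}{dt}(t)<0$ for $t\in[0,t_{*,1})$; - $\|y(t)\|_{1,1}=\|y_0\|_{1,1}$ for $t\in[0,t_* )$. If $t_*<\infty$, then $t_{*,1}>t_*$, and the second, third, fourth and last properties also hold at $t=t_*$.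
   Context: $\|x\|_{1,1}=\sum_j j|x_j|$, $\mathcal X_{1,1}=\{x:\|x\|_{1,1}<\infty\}$, $\mathcal X_{1,i}=\{x\in\mathcal X_{1,1}:x_j=0 \text{ for } j<i\}$, and $\mathcal X^+_{1,i}$ is the subset with nonnegative entries. $F$ is defined by - $F_j(y)=0$ for $j<i$; - $F_i(y)=-a_iy_i-\sum_{j\ge i}a_jy_j$; - $F_j(y)=a_{j-i}y_{j-i}-a_jy_j$ for $j\ge i+1$. The solution $y\in C([0,\infty);\mathcal X_{1,i})$, with $C^1$ components, exists and is unique. *)

(* Defs.v *)
From Stdlib Require Import Reals Lra Lia Arith ClassicalEpsilon.
Open Scope R_scope.

(* Value of a real series (meaningful when it converges; chosen arbitrarily otherwise). *)
Definition series_sum (u : nat -> R) : R :=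
  epsilon (inhabits 0%R) (fun l => infinite_sum u l).

Definition norm11 (x : nat -> R) : R :=
  series_sum (fun j => INR j * Rabs (x j)).

Definition X11 (x : nat -> R) : Prop :=
  exists l, infinite_sum (fun j => INR j * Rabs (x j)) l.

Definition X1i (i : nat) (x : nat -> R) : Prop :=
  X11 x /\ (forall j, (j < i)%nat -> x j = 0).

Definition X1i_pos (i : nat) (x : nat -> R) : Prop :=
  X1i i x /\ (forall j, 0 <= x j).

Definition F (i : nat) (a : nat -> R) (y : nat -> R) (j : nat) : R :=
  if (j <? i)%nat then 0
  else if (j =? i)%nat then
    - a i * y i - series_sum (fun k => if (i <=? k)%nat then a k * y k else 0)
  else a (j - i)%nat * y (j - i)%nat - a j * y j.

Definition has_deriv_nonneg (f f' : R -> R) : Prop :=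
  forall t, 0 <= t -> forall eps, 0 < eps -> exists delta, 0 < delta /\
    forall h, h <> 0 -> 0 <= t + h -> Rabs h < delta ->
      Rabs ((f (t + h) - f t) / h - f' t) < eps.

Definition cont_nonneg (g : R -> R) : Prop :=
  forall t, 0 <= t -> forall eps, 0 < eps -> exists delta, 0 < delta /\
    forall s, 0 <= s -> Rabs (s - t) < delta -> Rabs (g s - g t) < eps.

Definition cont_X11_nonneg (y : R -> nat -> R) : Prop :=
  forall t, 0 <= t -> forall eps, 0 < eps -> exists delta, 0 < delta /\
    forall s, 0 <= s -> Rabs (s - t) < delta ->
      norm11 (fun j => y s j - y t j) < eps.

Definition is_solution (i : nat) (a : nat -> R) (y0 : nat -> R)
    (y : R -> nat -> R) : Prop :=
  y 0 = y0 /\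
  (forall t, 0 <= t -> X1i i (y t)) /\
  cont_X11_nonneg y /\
  (forall j, has_deriv_nonneg (fun t => y t j) (fun t => F i a (y t) j)) /\
  (forall j, cont_nonneg (fun t => F i a (y t) j)).

(* Extended times in (0, oo]: None stands for +oo. *)
Definition before (T : option R) (t : R) : Prop :=
  match T with Some s => t < s | None => True end.

Definition ext_le (T1 T2 : option R) : Prop :=
  match T1, T2 with
  | _, None => True
  | None, Some _ => False
  | Some s1, Some s2 => s1 <= s2
  end.

(* Main.v *)
Require Import Defs.
From Stdlib Require Import Reals.
Open Scope R_scope.
From Stdlib Require Import Lra Lia Psatz Arith ClassicalEpsilon Classical.


Lemma is_cv (u : nat -> R) l : infinite_sum u l -> Un_cv (sum_f_R0 u) l.
Proof. intro H; exact H. Qed.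

Lemma ss_eq u l : infinite_sum u l -> series_sum u = l.
Proof.
  intro H. unfold series_sum.
  assert (H2 := epsilon_spec (inhabits 0) (fun l => infinite_sum u l) (ex_intro _ l H)).
  eapply uniqueness_sum; eauto.
Qed.

Lemma cv_const c : Un_cv (fun _ => c) c.
Proof. intros e He; exists 0%nat; intros; unfold Rdist; rewrite Rminus_diag, Rabs_R0; lra. Qed.

Lemma cv_le_ev U V l1 l2 : Un_cv U l1 -> Un_cv V l2 ->
  (exists N, forall n, (N <= n)%nat -> U n <= V n) -> l1 <= l2.
Proof.
  intros HU HV [N HN].
  destruct (Rle_dec l1 l2) as [h|h]; [exact h|].
  exfalso. assert (e : 0 < (l1 - l2)/2) by lra.
  destruct (HU _ e) as [N1 H1]. destruct (HV _ e) as [N2 H2].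
  set (n := (N + N1 + N2)%nat).
  specialize (H1 n ltac:(unfold n; lia)). specialize (H2 n ltac:(unfold n; lia)).
  specialize (HN n ltac:(unfold n; lia)). unfold Rdist in *.
  apply Rabs_def2 in H1; apply Rabs_def2 in H2. lra.
Qed.

Lemma psum_mono u n m : (forall k, 0 <= u k) -> (n <= m)%nat -> sum_f_R0 u n <= sum_f_R0 u m.
Proof.
  intros Hu Hnm. induction Hnm. lra. simpl. specialize (Hu (S m)). lra.
Qed.

Lemma psum_nonneg u n : (forall k, 0 <= u k) -> 0 <= sum_f_R0 u n.
Proof. intros Hu. induction n; simpl. apply Hu. specialize (Hu (S n)); lra. Qed.

Lemma psum_le_lim u l n : (forall k, 0 <= u k) -> infinite_sum u l -> sum_f_R0 u n <= l.
Proof.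
  intros Hu Hl. apply (cv_le_ev (fun _ => sum_f_R0 u n) (sum_f_R0 u)).
  apply cv_const. exact Hl. exists n. intros m Hm. apply psum_mono; auto.
Qed.

Lemma nonneg_cv u C : (forall k, 0 <= u k) -> (forall n, sum_f_R0 u n <= C) ->
  exists l, infinite_sum u l.
Proof.
  intros Hu HC. assert (Hg : Un_growing (sum_f_R0 u)).
  { intro n. simpl. specialize (Hu (S n)). lra. }
  assert (Hb : has_ub (sum_f_R0 u)).
  { exists C. intros x [n ->]. apply HC. }
  destruct (growing_cv _ Hg Hb) as [l Hl]. exists l. exact Hl.
Qed.

Lemma isum_plus u v lu lv : infinite_sum u lu -> infinite_sum v lv ->
  infinite_sum (fun k => u k + v k) (lu + lv).
Proof.
  intros Hu Hv. apply is_cv in Hu. apply is_cv in Hv.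
  assert (H := CV_plus _ _ _ _ Hu Hv).
  intros e He. destruct (H e He) as [N HN]. exists N. intros n Hn.
  rewrite plus_sum. apply HN; auto.
Qed.

Lemma isum_scal c u lu : infinite_sum u lu -> infinite_sum (fun k => c * u k) (c * lu).
Proof.
  intros Hu. apply is_cv in Hu.
  assert (H := CV_mult _ _ _ _ (cv_const c) Hu).
  intros e He. destruct (H e He) as [N HN]. exists N. intros n Hn.
  replace (sum_f_R0 (fun k => c * u k) n) with (c * sum_f_R0 u n). apply HN; auto.
  rewrite scal_sum. apply sum_eq. intros; ring.
Qed.

Lemma full_le u v lu lv : (forall k, u k <= v k) -> infinite_sum u lu -> infinite_sum v lv -> lu <= lv.
Proof.
  intros H Hu Hv. apply (cv_le_ev _ _ _ _ Hu Hv). exists 0%nat. intros. apply sum_Rle. auto.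
Qed.

Lemma tail_le u v lu lv n : (forall k, u k <= v k) -> infinite_sum u lu -> infinite_sum v lv ->
  lu - sum_f_R0 u n <= lv - sum_f_R0 v n.
Proof.
  intros H Hu Hv. apply is_cv in Hu. apply is_cv in Hv.
  apply (cv_le_ev _ _ _ _ (CV_minus _ _ _ _ Hu (cv_const (sum_f_R0 u n)))
                          (CV_minus _ _ _ _ Hv (cv_const (sum_f_R0 v n)))).
  exists n. intros m Hm.
  assert (sum_f_R0 (fun k => v k - u k) n <= sum_f_R0 (fun k => v k - u k) m).
  { apply psum_mono; auto. intros k; specialize (H k); lra. }
  rewrite !minus_sum in H0. lra.
Qed.

Lemma tail_nonneg u l n : (forall k, 0 <= u k) -> infinite_sum u l -> 0 <= l - sum_f_R0 u n.
Proof. intros; assert (H1 := psum_le_lim u l n H H0); lra. Qed.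

Definition wa (x : nat -> R) := fun k => INR k * Rabs (x k).

Lemma wa_nonneg x k : 0 <= wa x k.
Proof. unfold wa. apply Rmult_le_pos. apply pos_INR. apply Rabs_pos. Qed.

Lemma X11_sum x : X11 x -> infinite_sum (wa x) (norm11 x).
Proof. intros [l Hl]. unfold norm11. rewrite (ss_eq _ _ Hl). exact Hl. Qed.

Definition dif (x z : nat -> R) := fun k => x k - z k.

Lemma wa_tri x z k : wa x k <= wa z k + wa (dif x z) k.
Proof.
  unfold wa, dif. rewrite <- Rmult_plus_distr_l. apply Rmult_le_compat_l. apply pos_INR.
  replace (x k) with (z k + (x k - z k)) at 1 by ring. apply Rabs_triang.
Qed.

Lemma X11_dif x z : X11 x -> X11 z -> X11 (dif x z).
Proof.
  intros Hx Hz. apply X11_sum in Hx. apply X11_sum in Hz.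
  destruct (nonneg_cv (wa (dif x z)) (norm11 x + norm11 z)) as [l Hl].
  - apply wa_nonneg.
  - intro n. apply Rle_trans with (sum_f_R0 (fun k => wa x k + wa z k) n).
    + apply sum_Rle. intros k _. unfold wa, dif. rewrite <- Rmult_plus_distr_l.
      apply Rmult_le_compat_l. apply pos_INR.
      unfold Rminus. rewrite <- (Rabs_Ropp (z k)). apply Rabs_triang.
    + rewrite plus_sum. pose proof (psum_le_lim _ _ n (wa_nonneg x) Hx).
      pose proof (psum_le_lim _ _ n (wa_nonneg z) Hz). lra.
  - exists l; exact Hl.
Qed.

Lemma norm_tri x z : X11 x -> X11 z -> norm11 x <= norm11 z + norm11 (dif x z).
Proof.
  intros Hx Hz. assert (Hd := X11_sum _ (X11_dif x z Hx Hz)).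
  apply X11_sum in Hx. apply X11_sum in Hz.
  apply (full_le _ _ _ _ (wa_tri x z) Hx (isum_plus _ _ _ _ Hz Hd)).
Qed.

Definition tailN (n : nat) (x : nat -> R) := norm11 x - sum_f_R0 (wa x) n.

Lemma tail_tri x z n : X11 x -> X11 z -> tailN n x <= tailN n z + norm11 (dif x z).
Proof.
  intros Hx Hz. assert (Hd := X11_sum _ (X11_dif x z Hx Hz)).
  apply X11_sum in Hx. apply X11_sum in Hz.
  assert (H := tail_le _ _ _ _ n (wa_tri x z) Hx (isum_plus _ _ _ _ Hz Hd)).
  unfold tailN. rewrite plus_sum in H.
  pose proof (psum_nonneg (wa (dif x z)) n (wa_nonneg _)). lra.
Qed.

Lemma tail_small x e : X11 x -> 0 < e -> exists N, forall n, (N <= n)%nat -> tailN n x <= e.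
Proof.
  intros Hx He. apply X11_sum in Hx. destruct (Hx e He) as [N HN]. exists N.
  intros n Hn. specialize (HN n Hn). unfold Rdist in HN. unfold tailN.
  apply Rabs_def2 in HN. lra.
Qed.

Lemma tail_nonneg' x n : X11 x -> 0 <= tailN n x.
Proof. intros Hx. apply X11_sum in Hx. unfold tailN. apply tail_nonneg; auto. apply wa_nonneg. Qed.


Lemma hd_deriv_pos f f' t : has_deriv_nonneg f f' -> 0 < t -> derivable_pt_lim f t (f' t).
Proof.
  intros H Ht e He. destruct (H t (Rlt_le _ _ Ht) e He) as [d [Hd Hh]].
  assert (Hm : 0 < Rmin d t) by (apply Rmin_pos; lra).
  exists (mkposreal _ Hm). intros h Hh0 Hhd. simpl in Hhd.
  apply Hh; auto.
  - assert (Rabs h < t) by (eapply Rlt_le_trans; [exact Hhd| apply Rmin_r]).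
    apply Rabs_def2 in H0. lra.
  - eapply Rlt_le_trans; [exact Hhd| apply Rmin_l].
Qed.

Lemma hd_cont f f' : has_deriv_nonneg f f' ->
  forall t, 0 <= t -> forall e, 0 < e -> exists d, 0 < d /\
    forall s, 0 <= s -> Rabs (s - t) < d -> Rabs (f s - f t) < e.
Proof.
  intros H t Ht e He. destruct (H t Ht 1 Rlt_0_1) as [d [Hd Hh]].
  set (K := Rabs (f' t) + 1).
  assert (HK : 0 < K) by (unfold K; pose proof (Rabs_pos (f' t)); lra).
  assert (Hm : 0 < Rmin d (e / K)) by (apply Rmin_pos; [lra| apply Rdiv_lt_0_compat; lra]).
  exists (Rmin d (e/K)). split; auto. intros s Hs Hst.
  destruct (Req_dec s t) as [->|Hne]. rewrite Rminus_diag, Rabs_R0; lra.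
  assert (Hh1 : Rabs (s - t) < d) by (eapply Rlt_le_trans; [exact Hst| apply Rmin_l]).
  assert (Hh2 : Rabs (s - t) < e / K) by (eapply Rlt_le_trans; [exact Hst| apply Rmin_r]).
  assert (Hnz : s - t <> 0) by lra.
  specialize (Hh (s - t) Hnz ltac:(replace (t + (s - t)) with s by ring; lra) Hh1).
  replace (t + (s - t)) with s in Hh by ring.
  assert (Hq : Rabs ((f s - f t) / (s - t)) < K).
  { unfold K. apply Rle_lt_trans with (Rabs ((f s - f t)/(s-t) - f' t) + Rabs (f' t)).
    replace ((f s - f t)/(s-t)) with (((f s - f t)/(s-t) - f' t) + f' t) at 1 by ring.
    apply Rabs_triang. lra. }
  replace (f s - f t) with ((f s - f t)/(s - t) * (s - t)) by (field; auto).
  rewrite Rabs_mult.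
  apply Rle_lt_trans with (K * Rabs (s - t)).
  apply Rmult_le_compat_r. apply Rabs_pos. lra.
  apply Rlt_le_trans with (K * (e / K)). apply Rmult_lt_compat_l; auto.
  right; field; lra.
Qed.

Lemma my_mono f f' a b : a < b -> (forall c, a <= c <= b -> derivable_pt_lim f c (f' c)) ->
  (forall c, a < c < b -> 0 <= f' c) -> f a <= f b.
Proof.
  intros Hab Hd Hp. destruct (MVT_cor2 f f' a b Hab Hd) as [c [Hc Hc2]].
  assert (0 <= f' c * (b - a)) by (apply Rmult_le_pos; [apply Hp; auto| lra]). lra.
Qed.

Lemma my_smono f f' a b : a < b -> (forall c, a <= c <= b -> derivable_pt_lim f c (f' c)) ->
  (forall c, a < c < b -> 0 < f' c) -> f a < f b.
Proof.
  intros Hab Hd Hp. destruct (MVT_cor2 f f' a b Hab Hd) as [c [Hc Hc2]].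
  assert (0 < f' c * (b - a)) by (apply Rmult_lt_0_compat; [apply Hp; auto| lra]). lra.
Qed.

Lemma psum_deriv (g : R -> nat -> R) (g' : nat -> R) (w : nat -> R) t L :
  (forall j, derivable_pt_lim (fun u => g u j) t (g' j)) ->
  derivable_pt_lim (fun u => sum_f_R0 (fun j => w j * g u j) L) t (sum_f_R0 (fun j => w j * g' j) L).
Proof.
  intros H. induction L as [|L IH]; simpl.
  - apply (derivable_pt_lim_scal (fun u => g u 0%nat)). apply H.
  - apply (derivable_pt_lim_plus (fun u => sum_f_R0 (fun j => w j * g u j) L)
             (fun u => w (S L) * g u (S L))); auto.
    apply (derivable_pt_lim_scal (fun u => g u (S L))). apply H.
Qed.

Lemma exp_prod_deriv f c t l : derivable_pt_lim f t l ->
  derivable_pt_lim (fun u => exp (c * u) * f u) t (exp (c * t) * (c * f t + l)).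
Proof.
  intros H.
  assert (He : derivable_pt_lim (fun u => exp (c * u)) t (exp (c * t) * c)).
  { apply (derivable_pt_lim_comp (fun u => c * u) exp t c (exp (c * t))).
    pose proof (derivable_pt_lim_scal id c t 1 (derivable_pt_lim_id t)) as H1.
    rewrite Rmult_1_r in H1. exact H1.
    apply derivable_pt_lim_exp. }
  assert (Hm := derivable_pt_lim_mult _ _ _ _ _ He H).
  replace (exp (c * t) * (c * f t + l)) with (exp (c * t) * c * f t + exp (c * t) * l) by ring.
  exact Hm.
Qed.

Lemma my_cind (P : R -> Prop) (t : R) : 0 <= t -> P 0 ->
  (forall s, 0 <= s <= t -> exists d, 0 < d /\ forall a b, 0 <= a <= s -> s <= b <= t ->
      s - a < d -> b - s < d -> P a -> P b) -> P t.
Proof.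
  intros Ht P0 Hs.
  set (E := fun x => 0 <= x <= t /\ P x).
  assert (Hb : bound E) by (exists t; intros x [Hx _]; lra).
  assert (Hne : exists x, E x) by (exists 0; split; [lra| auto]).
  destruct (completeness E Hb Hne) as [c [Hub Hlub]].
  assert (Hc0 : 0 <= c) by (apply Hub; split; [lra|auto]).
  assert (Hct : c <= t) by (apply Hlub; intros x [Hx _]; lra).
  destruct (Hs c (conj Hc0 Hct)) as [d [Hd Hab]].
  assert (Ha : exists a, E a /\ c - d < a).
  { apply NNPP; intro Hn.
    assert (c <= c - d). { apply Hlub. intros x Hx. apply Rnot_lt_le. intro. apply Hn; eauto. }
    lra. }
  destruct Ha as [a [[Ha1 Ha2] Ha3]].
  assert (Hac : a <= c) by (apply Hub; split; auto).
  destruct (Rlt_le_dec c t) as [Hlt|Hge].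
  - exfalso. set (b := Rmin t (c + d/2)).
    assert (Hb1 : c < b) by (unfold b; apply Rmin_glb_lt; lra).
    assert (Hb2 : b <= t) by apply Rmin_l.
    assert (Hb3 : b <= c + d/2) by apply Rmin_r.
    assert (E b). { split. lra. apply (Hab a b); auto; lra. }
    assert (b <= c) by (apply Hub; auto). lra.
  - replace t with c by lra. apply (Hab a c); auto; lra.
Qed.


Definition Setup i a A y0 (y : R -> nat -> R) : Prop :=
  (1 <= i)%nat /\ 0 < A /\ (forall j, (1<=j)%nat -> 0 < a j /\ a j <= A * INR j) /\
  X1i_pos i y0 /\ 0 < y0 i /\ is_solution i a y0 y.

Lemma F_succ i a z j : (i < j)%nat -> F i a z j = a (j - i)%nat * z (j - i)%nat - a j * z j.
Proof.
  intros H. unfold F.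
  replace (j <? i)%nat with false by (symmetry; apply Nat.ltb_ge; lia).
  replace (j =? i)%nat with false by (symmetry; apply Nat.eqb_neq; lia). reflexivity.
Qed.

Lemma F_i i a z : F i a z i = - a i * z i -
   series_sum (fun k => if (i <=? k)%nat then a k * z k else 0).
Proof.
  unfold F. rewrite Nat.ltb_irrefl, Nat.eqb_refl. reflexivity.
Qed.

Lemma F_lt i a z j : (j < i)%nat -> F i a z j = 0.
Proof. intros H. unfold F. replace (j <? i)%nat with true by (symmetry; apply Nat.ltb_lt; lia). auto. Qed.


Lemma S_yX i a A y0 y t : Setup i a A y0 y -> 0 <= t -> X11 (y t).
Proof. intros (_&_&_&_&_&_&HX&_) Ht. apply (HX t Ht). Qed.

Lemma S_yz i a A y0 y t k : Setup i a A y0 y -> 0 <= t -> (k < i)%nat -> y t k = 0.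
Proof. intros (_&_&_&_&_&_&HX&_) Ht Hk. apply (HX t Ht). auto. Qed.

Lemma S_y0 i a A y0 y : Setup i a A y0 y -> y 0 = y0.
Proof. intros (_&_&_&_&_&H&_). auto. Qed.

Lemma S_der i a A y0 y j t : Setup i a A y0 y -> 0 < t ->
  derivable_pt_lim (fun u => y u j) t (F i a (y t) j).
Proof. intros (_&_&_&_&_&_&_&_&HD&_) Ht. apply (hd_deriv_pos _ (fun u => F i a (y u) j)); auto. Qed.

Lemma S_cont i a A y0 y j t : Setup i a A y0 y -> 0 <= t -> forall e, 0 < e -> exists d, 0 < d /\
    forall s, 0 <= s -> Rabs (s - t) < d -> Rabs (y s j - y t j) < e.
Proof. intros (_&_&_&_&_&_&_&_&HD&_) Ht. exact (hd_cont _ _ (HD j) t Ht). Qed.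

Lemma S_a i a A y0 y j : Setup i a A y0 y -> (1 <= j)%nat -> 0 < a j /\ a j <= A * INR j.
Proof. intros (_&_&H&_). auto. Qed.

Lemma gmono i a A y0 y j s u : Setup i a A y0 y -> (i < j)%nat -> 0 < s < u ->
  (forall x, s < x < u -> 0 <= y x (j - i)%nat) ->
  exp (a j * s) * y s j <= exp (a j * u) * y u j.
Proof.
  intros HS Hj Hsu Hp.
  apply (my_mono (fun x => exp (a j * x) * y x j)
      (fun x => exp (a j * x) * (a j * y x j + F i a (y x) j))); [lra| |].
  - intros c Hc. apply exp_prod_deriv. apply (S_der i a A y0 y); auto; lra.
  - intros c Hc. rewrite F_succ by auto.
    apply Rmult_le_pos. left; apply exp_pos.
    replace (a j * y c j + (a (j - i)%nat * y c (j - i)%nat - a j * y c j))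
      with (a (j - i)%nat * y c (j - i)%nat) by ring.
    apply Rmult_le_pos. left; apply (S_a i a A y0 y); auto; lia. auto.
Qed.

Lemma gsmono i a A y0 y j s u : Setup i a A y0 y -> (i < j)%nat -> 0 < s < u ->
  (forall x, s < x < u -> 0 < y x (j - i)%nat) ->
  exp (a j * s) * y s j < exp (a j * u) * y u j.
Proof.
  intros HS Hj Hsu Hp.
  apply (my_smono (fun x => exp (a j * x) * y x j)
      (fun x => exp (a j * x) * (a j * y x j + F i a (y x) j))); [lra| |].
  - intros c Hc. apply exp_prod_deriv. apply (S_der i a A y0 y); auto; lra.
  - intros c Hc. rewrite F_succ by auto.
    apply Rmult_lt_0_compat. apply exp_pos.
    replace (a j * y c j + (a (j - i)%nat * y c (j - i)%nat - a j * y c j))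
      with (a (j - i)%nat * y c (j - i)%nat) by ring.
    apply Rmult_lt_0_compat. apply (S_a i a A y0 y); auto; lia. auto.
Qed.

Lemma POS i a A y0 y T : Setup i a A y0 y ->
  (forall u, 0 <= u <= T -> 0 <= y u i) ->
  forall j u, 0 <= u <= T -> 0 <= y u j.
Proof.
  intros HS Hi j. assert (Hi1 : (1 <= i)%nat) by (destruct HS; auto).
  induction j as [j IH] using lt_wf_ind. intros u Hu.
  destruct (lt_eq_lt_dec j i) as [[Hlt|Heq]|Hgt].
  - rewrite (S_yz i a A y0 y); auto; lra.
  - subst; auto.
  - destruct (Req_dec u 0) as [->|Hu0].
    + rewrite (S_y0 i a A y0 y HS). destruct HS as (_&_&_&(_&Hp)&_). auto.
    + apply Rnot_lt_le. intro Hneg.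
      assert (Hlow : forall s, 0 < s < u -> y s j <= y u j).
      { intros s Hs. assert (H := gmono i a A y0 y j s u HS Hgt Hs
          ltac:(intros x Hx; apply IH; [lia| lra])).
        assert (Hexp : exp (a j * u) = exp (a j * s) * exp (a j * (u - s))).
        { rewrite <- exp_plus. f_equal. ring. }
        rewrite Hexp in H. assert (Hes := exp_pos (a j * s)).
        assert (H2 : y s j <= exp (a j * (u - s)) * y u j).
        { apply Rmult_le_reg_l with (exp (a j * s)); auto. lra. }
        assert (1 <= exp (a j * (u - s))).
        { pose proof (exp_ineq1_le (a j * (u - s))).
          assert (0 <= a j * (u - s)) by (apply Rmult_le_pos;
            [left; apply (S_a i a A y0 y); auto; lia| lra]). lra. }
        apply Rle_trans with (1 := H2). nra. }
      destruct (S_cont i a A y0 y j 0 HS ltac:(lra) (- y u j) ltac:(lra)) as [d [Hd Hc]].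
      set (s := Rmin (d/2) (u/2)).
      assert (Hs1 : 0 < s) by (unfold s; apply Rmin_pos; lra).
      assert (Hs2 : s <= d/2) by apply Rmin_l. assert (Hs3 : s <= u/2) by apply Rmin_r.
      specialize (Hc s ltac:(lra) ltac:(rewrite Rminus_0_r, Rabs_right; lra)).
      specialize (Hlow s ltac:(lra)).
      rewrite (S_y0 i a A y0 y HS) in Hc.
      assert (0 <= y0 j) by (destruct HS as (_&_&_&(_&Hp)&_); auto).
      apply Rabs_def2 in Hc. lra.
Qed.

Lemma POS2 i a A y0 y T : Setup i a A y0 y ->
  (forall u, 0 <= u <= T -> 0 <= y u i) ->
  forall j u, (i < j)%nat -> 0 < y0 j -> 0 <= u <= T -> 0 < y u j.
Proof.
  intros HS Hi j u Hj Hy0 Hu.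
  destruct (Req_dec u 0) as [->|Hu0].
  - rewrite (S_y0 i a A y0 y HS). auto.
  - destruct (S_cont i a A y0 y j 0 HS ltac:(lra) (y0 j) Hy0) as [d [Hd Hc]].
    set (s := Rmin (d/2) (u/2)).
    assert (Hs1 : 0 < s) by (unfold s; apply Rmin_pos; lra).
    assert (Hs2 : s <= d/2) by apply Rmin_l. assert (Hs3 : s <= u/2) by apply Rmin_r.
    specialize (Hc s ltac:(lra) ltac:(rewrite Rminus_0_r, Rabs_right; lra)).
    rewrite (S_y0 i a A y0 y HS) in Hc. apply Rabs_def2 in Hc.
    assert (H := gmono i a A y0 y j s u HS Hj ltac:(lra)
          ltac:(intros x Hx; apply (POS i a A y0 y T HS Hi); lra)).
    assert (0 < exp (a j * s) * y s j) by (apply Rmult_lt_0_compat; [apply exp_pos| lra]).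
    assert (Heu := exp_pos (a j * u)).
    apply Rmult_lt_reg_l with (exp (a j * u)); auto. lra.
Qed.

Lemma POS3 i a A y0 y T : Setup i a A y0 y ->
  (forall u, 0 <= u <= T -> 0 <= y u i) -> (forall u, 0 <= u < T -> 0 < y u i) ->
  forall k, (2 <= k)%nat -> forall u, 0 < u <= T -> 0 < y u (k * i)%nat.
Proof.
  intros HS Hi Hi2 k Hk. assert (Hi1 : (1 <= i)%nat) by (destruct HS; auto).
  induction Hk as [|k Hk IH]; intros u Hu.
  - assert (Hj : (i < 2 * i)%nat) by lia.
    assert (H := gsmono i a A y0 y (2 * i) (u/2) u HS Hj ltac:(lra)
      ltac:(intros x Hx; replace (2 * i - i)%nat with i by lia; apply Hi2; lra)).
    assert (0 <= y (u/2) (2 * i)%nat) by (apply (POS i a A y0 y T HS Hi); lra).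
    assert (0 <= exp (a (2 * i)%nat * (u/2)) * y (u/2) (2*i)%nat)
      by (apply Rmult_le_pos; [left; apply exp_pos| auto]).
    assert (Heu := exp_pos (a (2*i)%nat * u)).
    apply Rmult_lt_reg_l with (exp (a (2*i)%nat * u)); auto. lra.
  - assert (Hj : (i < S k * i)%nat) by nia.
    assert (H := gsmono i a A y0 y (S k * i) (u/2) u HS Hj ltac:(lra)
      ltac:(intros x Hx; replace (S k * i - i)%nat with (k * i)%nat by nia; apply IH; lra)).
    assert (0 <= y (u/2) (S k * i)%nat) by (apply (POS i a A y0 y T HS Hi); lra).
    assert (0 <= exp (a (S k * i)%nat * (u/2)) * y (u/2) (S k*i)%nat)
      by (apply Rmult_le_pos; [left; apply exp_pos| auto]).
    assert (Heu := exp_pos (a (S k*i)%nat * u)).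
    apply Rmult_lt_reg_l with (exp (a (S k*i)%nat * u)); auto. lra.
Qed.


Definition Bf i (a : nat -> R) (z : nat -> R) := fun k => if (i <=? k)%nat then a k * z k else 0.

Lemma psum_allzero g n : (forall j, (j <= n)%nat -> g j = 0) -> sum_f_R0 g n = 0.
Proof.
  induction n; intros H; simpl. apply H; lia.
  rewrite IHn by (intros; apply H; lia). rewrite H by lia. ring.
Qed.

Lemma psum_zero_below g n : (forall j, (j < n)%nat -> g j = 0) -> sum_f_R0 g n = g n.
Proof.
  destruct n; intros H; simpl. auto.
  rewrite psum_allzero by (intros; apply H; lia). ring.
Qed.

Lemma ID i a z w m : (1 <= i)%nat -> (forall k, (k < i)%nat -> z k = 0) ->
  sum_f_R0 (fun j => w j * F i a z j) (m + i) =
  - w i * series_sum (Bf i a z) + sum_f_R0 (fun k => w (k + i)%nat * Bf i a z k) m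
  - sum_f_R0 (fun k => w k * Bf i a z k) (m + i).
Proof.
  intros Hi Hz. induction m as [|m IH].
  - simpl. rewrite (psum_zero_below (fun j => w j * F i a z j)) by
      (intros j Hj; rewrite F_lt by auto; ring).
    rewrite (psum_zero_below (fun k => w k * Bf i a z k)) by
      (intros j Hj; unfold Bf; replace (i <=? j)%nat with false by (symmetry; apply Nat.leb_gt; lia); ring).
    rewrite F_i. unfold Bf. rewrite Nat.leb_refl.
    replace (i <=? 0)%nat with false by (symmetry; apply Nat.leb_gt; lia). ring.
  - replace (S m + i)%nat with (S (m + i)) by lia. simpl. rewrite IH.
    rewrite F_succ by lia. replace (S (m + i) - i)%nat with (S m) by lia.
    replace (Bf i a z (S (m + i))) with (a (S (m + i)) * z (S (m + i)))
      by (unfold Bf; replace (i <=? S (m + i))%nat with true by (symmetry; apply Nat.leb_le; lia); auto).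
    replace (Bf i a z (S m)) with (a (S m) * z (S m)).
    ring.
    unfold Bf. destruct (i <=? S m)%nat eqn:E. auto.
    apply Nat.leb_gt in E. rewrite (Hz (S m)) by lia. ring.
Qed.

Lemma ind_sum f n m : (n <= m)%nat ->
  sum_f_R0 (fun k => if (k <=? n)%nat then f k else 0) m = sum_f_R0 f n.
Proof.
  intros H. induction H.
  - induction n. simpl. auto. rewrite !tech5. rewrite Nat.leb_refl.
    f_equal. rewrite <- IHn. apply sum_eq. intros k Hk.
    destruct (k <=? n)%nat eqn:E1; destruct (k <=? S n)%nat eqn:E2; auto;
      apply Nat.leb_le in E1 || apply Nat.leb_gt in E1;
      apply Nat.leb_le in E2 || apply Nat.leb_gt in E2; lia.
  - rewrite tech5. rewrite IHle. destruct (S m <=? n)%nat eqn:E; [apply Nat.leb_le in E; lia| ring].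
Qed.

Lemma scal_sum' c f n : sum_f_R0 (fun k => c * f k) n = c * sum_f_R0 f n.
Proof. rewrite scal_sum. apply sum_eq; intros; ring. Qed.

Definition wN (N j : nat) := Rmin (INR j) (INR N).

Lemma wN_le N j : wN N j <= INR j.
Proof. apply Rmin_l. Qed.
Lemma wN_leN N j : wN N j <= INR N.
Proof. apply Rmin_r. Qed.
Lemma wN_nonneg N j : 0 <= wN N j.
Proof. unfold wN. apply Rmin_glb; apply pos_INR. Qed.
Lemma wN_eq N j : (j <= N)%nat -> wN N j = INR j.
Proof. intros; unfold wN. apply Rmin_left. apply le_INR; auto. Qed.
Lemma wN_diff N i k : 0 <= wN N (k + i) - wN N k <= INR i.
Proof.
  unfold wN. rewrite plus_INR. pose proof (pos_INR i). pose proof (pos_INR k).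
  unfold Rmin. destruct (Rle_dec (INR k + INR i) (INR N)); destruct (Rle_dec (INR k) (INR N)); lra.
Qed.

Lemma E_bounds i a A (z : nat -> R) N m :
  (1 <= i)%nat -> (i <= N)%nat -> (N <= m)%nat ->
  (forall j, (1<=j)%nat -> 0 < a j /\ a j <= A * INR j) -> 0 < A ->
  X11 z -> (forall k, 0 <= z k) -> (forall k, (k < i)%nat -> z k = 0) ->
  let E := sum_f_R0 (fun j => wN N j * F i a z j) (m + i) in
  E <= 0 /\ - INR i * A * tailN (N - i) z - INR N * A * tailN m z <= E.
Proof.
  intros Hi HN Hm Ha HA HX Hz Hz0 E.
  set (B := Bf i a z).
  assert (HB0 : forall k, 0 <= B k).
  { intro k. unfold B, Bf. destruct (i <=? k)%nat eqn:E1. apply Nat.leb_le in E1.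
    apply Rmult_le_pos; auto. left; apply Ha; lia. lra. }
  assert (HBA : forall k, B k <= A * wa z k).
  { intro k. unfold B, Bf, wa. rewrite (Rabs_right (z k)) by (apply Rle_ge; auto).
    destruct (i <=? k)%nat eqn:E1.
    - apply Nat.leb_le in E1. rewrite <- Rmult_assoc. apply Rmult_le_compat_r; auto. apply Ha; lia.
    - apply Rmult_le_pos; [lra|]. apply Rmult_le_pos; auto. apply pos_INR. }
  assert (HXs := X11_sum _ HX).
  assert (HAs := isum_scal A _ _ HXs).
  assert (HBs : infinite_sum B (series_sum B)).
  { destruct (nonneg_cv B (A * norm11 z) HB0) as [l Hl].
    - intro n. apply Rle_trans with (sum_f_R0 (fun k => A * wa z k) n).
      apply sum_Rle; auto. apply psum_le_lim; auto. intros; apply Rmult_le_pos. lra. apply wa_nonneg.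
    - rewrite (ss_eq _ _ Hl). auto. }
  assert (Htail : forall n, series_sum B - sum_f_R0 B n <= A * tailN n z).
  { intro n. assert (H := tail_le _ _ _ _ n HBA HBs HAs).
    unfold tailN. replace (sum_f_R0 (fun k => A * wa z k) n) with (A * sum_f_R0 (wa z) n) in H.
    lra. rewrite scal_sum. apply sum_eq; intros; ring. }
  assert (HE : E = - wN N i * series_sum B + sum_f_R0 (fun k => wN N (k + i)%nat * B k) m
      - sum_f_R0 (fun k => wN N k * B k) (m + i)) by (apply ID; auto).
  rewrite wN_eq in HE by auto.
  set (P1 := sum_f_R0 (fun k => wN N (k + i)%nat * B k) m) in *.
  set (P2 := sum_f_R0 (fun k => wN N k * B k) (m + i)) in *.
  set (P3 := sum_f_R0 (fun k => wN N k * B k) m).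
  assert (Ha' : P1 - P3 <= INR i * sum_f_R0 B m).
  { unfold P1, P3. rewrite <- minus_sum, scal_sum. apply sum_Rle. intros k _.
    pose proof (wN_diff N i k). pose proof (HB0 k). nra. }
  assert (Hb : P3 <= P2).
  { unfold P3, P2. apply psum_mono. intros; apply Rmult_le_pos; auto. apply wN_nonneg. lia. }
  assert (Hc : INR i * sum_f_R0 B (N - i) <= P1 - P3).
  { unfold P1, P3. rewrite <- minus_sum, scal_sum.
    rewrite <- (ind_sum (fun k => B k * INR i) (N - i) m) by lia.
    apply sum_Rle. intros k _. destruct (k <=? N - i)%nat eqn:E1.
    - apply Nat.leb_le in E1. rewrite !wN_eq by lia. rewrite plus_INR. lra.
    - pose proof (wN_diff N i k). pose proof (HB0 k). nra. }
  assert (Hd : P2 - P3 <= INR N * (sum_f_R0 B (m + i) - sum_f_R0 B m)).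
  { assert (H := psum_mono (fun k => INR N * B k - wN N k * B k) m (m + i)
      ltac:(intro k; pose proof (wN_leN N k); pose proof (HB0 k); nra) ltac:(lia)).
    rewrite !minus_sum in H. rewrite !scal_sum' in H. unfold P2, P3. lra. }
  assert (HS1 : sum_f_R0 B m <= series_sum B) by (apply psum_le_lim; auto).
  assert (HS2 : sum_f_R0 B (m + i) <= series_sum B) by (apply psum_le_lim; auto).
  pose proof (Htail (N - i)%nat). pose proof (Htail m). pose proof (pos_INR i). pose proof (pos_INR N).
  split.
  - rewrite HE. nra.
  - rewrite HE. nra.
Qed.


Lemma S_cX i a A y0 y : Setup i a A y0 y -> cont_X11_nonneg y.
Proof. intros (_&_&_&_&_&_&_&H&_). auto. Qed.

Lemma norm_tri2 x z : X11 x -> X11 z -> norm11 x <= norm11 z + norm11 (dif z x).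
Proof.
  intros Hx Hz. assert (Hd := X11_sum _ (X11_dif z x Hz Hx)).
  apply X11_sum in Hx. apply X11_sum in Hz.
  refine (full_le _ _ _ _ _ Hx (isum_plus _ _ _ _ Hz Hd)).
  intro k. unfold wa, dif. rewrite <- Rmult_plus_distr_l. apply Rmult_le_compat_l. apply pos_INR.
  rewrite (Rabs_minus_sym (z k)).
  replace (x k) with (z k + (x k - z k)) at 1 by ring. apply Rabs_triang.
Qed.

Lemma G_upper N L z : X11 z -> (forall k, 0 <= z k) ->
  sum_f_R0 (fun j => wN N j * z j) L <= norm11 z.
Proof.
  intros HX Hz. apply Rle_trans with (sum_f_R0 (wa z) L).
  - apply sum_Rle. intros j _. unfold wa. rewrite Rabs_right by (apply Rle_ge; auto).
    apply Rmult_le_compat_r; auto. apply wN_le.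
  - apply psum_le_lim. apply wa_nonneg. apply X11_sum; auto.
Qed.

Lemma G_lower N L z : (N <= L)%nat -> (forall k, 0 <= z k) ->
  sum_f_R0 (wa z) N <= sum_f_R0 (fun j => wN N j * z j) L.
Proof.
  intros HL Hz. rewrite <- (ind_sum (wa z) N L HL). apply sum_Rle. intros j _.
  destruct (j <=? N)%nat eqn:E.
  - apply Nat.leb_le in E. unfold wa. rewrite Rabs_right by (apply Rle_ge; auto).
    rewrite wN_eq; auto. lra.
  - apply Rmult_le_pos; auto. apply wN_nonneg.
Qed.

Lemma G_deriv i a A y0 y N L u : Setup i a A y0 y -> 0 < u ->
  derivable_pt_lim (fun v => sum_f_R0 (fun j => wN N j * y v j) L) u
    (sum_f_R0 (fun j => wN N j * F i a (y u) j) L).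
Proof.
  intros HS Hu. apply (psum_deriv y (fun j => F i a (y u) j)).
  intro j. apply (S_der i a A y0 y); auto.
Qed.

Lemma S_i1 i a A y0 y : Setup i a A y0 y -> (1 <= i)%nat.
Proof. intros (H&_). auto. Qed.
Lemma S_A i a A y0 y : Setup i a A y0 y -> 0 < A.
Proof. intros (_&H&_). auto. Qed.

Lemma small_s i a A y0 y e t : Setup i a A y0 y -> 0 < e -> 0 < t ->
  exists s, 0 < s < t /\ norm11 (dif (y s) (y 0)) < e.
Proof.
  intros HS He Ht. destruct (S_cX i a A y0 y HS 0 ltac:(lra) e He) as [d [Hd H]].
  set (s := Rmin (d/2) (t/2)).
  assert (Hs1 : 0 < s) by (unfold s; apply Rmin_pos; lra).
  assert (Hs2 : s <= d/2) by apply Rmin_l. assert (Hs3 : s <= t/2) by apply Rmin_r.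
  exists s. split. lra. apply H. lra. rewrite Rminus_0_r, Rabs_right; lra.
Qed.

Lemma MU i a A y0 y t : Setup i a A y0 y -> 0 < t ->
  (forall u, 0 <= u <= t -> forall k, 0 <= y u k) -> norm11 (y t) <= norm11 y0.
Proof.
  intros HS Ht Hnn. apply Rnot_lt_le. intro Hlt.
  set (e := (norm11 (y t) - norm11 y0) / 2).
  destruct (small_s i a A y0 y e t HS ltac:(unfold e; lra) Ht) as [s [Hs Hsn]].
  assert (HXs := S_yX i a A y0 y s HS ltac:(lra)).
  assert (HX0 := S_yX i a A y0 y 0 HS ltac:(lra)).
  assert (Hns := norm_tri _ _ HXs HX0). rewrite (S_y0 i a A y0 y HS) in Hns, Hsn.
  assert (Hi1 := S_i1 _ _ _ _ _ HS).
  assert (Hb : forall N, (i <= N)%nat -> sum_f_R0 (wa (y t)) N <= norm11 (y s)).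
  { intros N HN.
    apply Rle_trans with (sum_f_R0 (fun j => wN N j * y t j) (N + i)).
    apply G_lower. lia. apply Hnn; lra.
    apply Rle_trans with (sum_f_R0 (fun j => wN N j * y s j) (N + i)).
    - assert (H := my_mono (fun v => - sum_f_R0 (fun j => wN N j * y v j) (N + i))
        (fun v => - sum_f_R0 (fun j => wN N j * F i a (y v) j) (N + i)) s t ltac:(lra)).
      cbv beta in H. enough (- sum_f_R0 (fun j => wN N j * y s j) (N + i) <=
        - sum_f_R0 (fun j => wN N j * y t j) (N + i)) by lra. apply H.
      + intros c Hc. apply (derivable_pt_lim_opp (fun v => sum_f_R0 (fun j => wN N j * y v j) (N + i))).
        apply (G_deriv i a A y0 y); auto; lra.
      + intros c Hc. destruct (E_bounds i a A (y c) N N Hi1 HN (le_n N) (fun j Hj => S_a i a A y0 y j HS Hj)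
          (S_A _ _ _ _ _ HS) (S_yX i a A y0 y c HS ltac:(lra)) (Hnn c ltac:(lra))
          (fun k Hk => S_yz i a A y0 y c k HS ltac:(lra) Hk)) as [H1 _]. cbv zeta in H1. lra.
    - apply G_upper. auto. apply Hnn; lra. }
  assert (norm11 (y t) <= norm11 (y s)).
  { apply (cv_le_ev (sum_f_R0 (wa (y t))) (fun _ => norm11 (y s))).
    apply X11_sum. apply (S_yX i a A y0 y t HS); lra. apply cv_const.
    exists i. auto. }
  unfold e in *. lra.
Qed.

Lemma UT i a A y0 y t e : Setup i a A y0 y -> 0 <= t -> 0 < e ->
  exists N0, forall u, 0 <= u <= t -> forall n, (N0 <= n)%nat -> tailN n (y u) <= e.
Proof.
  intros HS Ht He.
  apply (my_cind (fun s => exists N0, forall u, 0 <= u <= s -> forall n, (N0 <= n)%nat -> tailN n (y u) <= e) t Ht).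
  - destruct (tail_small (y 0) e (S_yX i a A y0 y 0 HS ltac:(lra)) He) as [N HN].
    exists N. intros u Hu. replace u with 0 by lra. auto.
  - intros s Hs.
    destruct (tail_small (y s) (e/2) (S_yX i a A y0 y s HS ltac:(lra)) ltac:(lra)) as [Ns HNs].
    destruct (S_cX i a A y0 y HS s ltac:(lra) (e/2) ltac:(lra)) as [d [Hd Hc]].
    exists d. split; auto. intros a0 b Ha Hb Had Hbd [Na HNa].
    exists (Na + Ns)%nat. intros u Hu n Hn.
    destruct (Rle_dec u a0) as [Hua|Hua].
    + apply HNa; [lra| lia].
    + assert (Hus : Rabs (u - s) < d) by (apply Rabs_def1; lra).
      specialize (Hc u ltac:(lra) Hus).
      assert (H := tail_tri (y u) (y s) n (S_yX i a A y0 y u HS ltac:(lra)) (S_yX i a A y0 y s HS ltac:(lra))).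
      specialize (HNs n ltac:(lia)). unfold dif in H. lra.
Qed.

Lemma ML i a A y0 y t : Setup i a A y0 y -> 0 < t ->
  (forall u, 0 <= u <= t -> forall k, 0 <= y u k) -> norm11 y0 <= norm11 (y t).
Proof.
  intros HS Ht Hnn.
  assert (Hi1 := S_i1 _ _ _ _ _ HS). assert (HA := S_A _ _ _ _ _ HS).
  assert (HiN := pos_INR i).
  set (K := 2 + (INR i * A + 1) * t).
  assert (HK : 0 < K) by (unfold K; assert (0 <= INR i * A) by nra; nra).
  assert (Main : forall e, 0 < e -> norm11 y0 - e * K <= norm11 (y t)).
  { intros e He.
    destruct (UT i a A y0 y t e HS ltac:(lra) He) as [N0 HN0].
    set (N := (N0 + i)%nat).
    assert (HNpos : 0 < INR N) by (apply lt_0_INR; unfold N; lia).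
    assert (He2 : 0 < e / (INR N * A)) by (apply Rdiv_lt_0_compat; nra).
    destruct (UT i a A y0 y t _ HS ltac:(lra) He2) as [M2 HM2].
    set (m := (N + M2)%nat).
    set (c := INR i * A * e + e).
    destruct (small_s i a A y0 y e t HS He Ht) as [s [Hs Hsn]].
    assert (HXs := S_yX i a A y0 y s HS ltac:(lra)).
    assert (HX0 := S_yX i a A y0 y 0 HS ltac:(lra)).
    assert (Hns := norm_tri2 _ _ HX0 HXs). rewrite (S_y0 i a A y0 y HS) in Hns, Hsn, HX0.
    set (G := fun v => sum_f_R0 (fun j => wN N j * y v j) (m + i)).
    assert (Hmono : G s + c * s <= G t + c * t).
    { apply (my_mono (fun v => G v + c * v)
        (fun v => sum_f_R0 (fun j => wN N j * F i a (y v) j) (m + i) + c) s t ltac:(lra)).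
      - intros x Hx. apply (derivable_pt_lim_plus G (fun v => c * v)).
        apply (G_deriv i a A y0 y); auto; lra.
        pose proof (derivable_pt_lim_scal id c x 1 (derivable_pt_lim_id x)) as H1.
        rewrite Rmult_1_r in H1. exact H1.
      - intros x Hx.
        destruct (E_bounds i a A (y x) N m Hi1 ltac:(unfold N; lia) ltac:(unfold m; lia)
          (fun j Hj => S_a i a A y0 y j HS Hj) HA (S_yX i a A y0 y x HS ltac:(lra)) (Hnn x ltac:(lra))
          (fun k Hk => S_yz i a A y0 y x k HS ltac:(lra) Hk)) as [_ H1]. cbv zeta in H1.
        assert (T1 : tailN (N - i) (y x) <= e) by (apply HN0; [lra| unfold N; lia]).
        assert (T2 : tailN m (y x) <= e / (INR N * A)) by (apply HM2; [lra| unfold m; lia]).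
        assert (T3 : INR N * A * tailN m (y x) <= e).
        { apply Rle_trans with (INR N * A * (e / (INR N * A))).
          apply Rmult_le_compat_l; nra. right; field; lra. }
        assert (T4 : INR i * A * tailN (N - i) (y x) <= INR i * A * e)
          by (apply Rmult_le_compat_l; nra).
        cbv beta. unfold c. lra. }
    assert (HGt : G t <= norm11 (y t)) by (apply G_upper; [apply (S_yX i a A y0 y t HS); lra| apply Hnn; lra]).
    assert (HGs : sum_f_R0 (wa (y s)) N <= G s) by (apply G_lower; [unfold m; lia| apply Hnn; lra]).
    assert (Htl : tailN N (y s) <= e) by (apply HN0; [lra| unfold N; lia]).
    unfold tailN in Htl.
    assert (0 <= INR i * A * e) by (repeat apply Rmult_le_pos; lra).
    assert (0 <= c) by (unfold c; lra). assert (0 <= c * s) by nra.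
    assert (Hct : c * t = e * ((INR i * A + 1) * t)) by (unfold c; ring).
    unfold dif in Hsn, Hns. unfold K. lra. }
  apply Rnot_lt_le. intro Hlt.
  set (e := (norm11 y0 - norm11 (y t)) / (2 * K)).
  assert (He : 0 < e) by (unfold e; apply Rdiv_lt_0_compat; lra).
  specialize (Main e He). unfold e in Main.
  replace ((norm11 y0 - norm11 (y t)) / (2 * K) * K) with ((norm11 y0 - norm11 (y t)) / 2) in Main
    by (field; lra). lra.
Qed.


Lemma Mass i a A y0 y t : Setup i a A y0 y -> 0 <= t ->
  (forall u, 0 <= u <= t -> 0 <= y u i) -> norm11 (y t) = norm11 y0.
Proof.
  intros HS Ht Hi. destruct (Req_dec t 0) as [->|Ht0].
  - rewrite (S_y0 i a A y0 y HS). auto.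
  - assert (Hnn : forall u, 0 <= u <= t -> forall k, 0 <= y u k)
      by (intros u Hu k; apply (POS i a A y0 y t HS Hi); auto).
    apply Rle_antisym. apply (MU i a A y0 y); auto; lra. apply (ML i a A y0 y); auto; lra.
Qed.

Lemma psum_ge_last u n : (forall k, 0 <= u k) -> u n <= sum_f_R0 u n.
Proof. intros H. destruct n; simpl. lra. pose proof (psum_nonneg u n H). lra. Qed.

Lemma FN i a A y0 y u : Setup i a A y0 y -> 0 <= u -> (forall k, 0 <= y u k) ->
  F i a (y u) i <= - a i * y u i - a (2 * i)%nat * y u (2 * i)%nat.
Proof.
  intros HS Hu Hnn. assert (Hi1 := S_i1 _ _ _ _ _ HS). assert (HA := S_A _ _ _ _ _ HS).
  assert (HX := S_yX i a A y0 y u HS Hu).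
  set (z := y u) in *.
  set (B := Bf i a z).
  assert (HB0 : forall k, 0 <= B k).
  { intro k. unfold B, Bf. destruct (i <=? k)%nat eqn:E1. apply Nat.leb_le in E1.
    apply Rmult_le_pos; auto. left; apply (S_a i a A y0 y); auto; lia. lra. }
  assert (HBA : forall k, B k <= A * wa z k).
  { intro k. unfold B, Bf, wa. rewrite (Rabs_right (z k)) by (apply Rle_ge; auto).
    destruct (i <=? k)%nat eqn:E1.
    - apply Nat.leb_le in E1. rewrite <- Rmult_assoc. apply Rmult_le_compat_r; auto.
      apply (S_a i a A y0 y); auto; lia.
    - apply Rmult_le_pos; [lra|]. apply Rmult_le_pos; auto. apply pos_INR. }
  assert (HXs := X11_sum _ HX).
  assert (HBs : infinite_sum B (series_sum B)).
  { destruct (nonneg_cv B (A * norm11 z) HB0) as [l Hl].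
    - intro n. apply Rle_trans with (sum_f_R0 (fun k => A * wa z k) n).
      apply sum_Rle; auto. apply psum_le_lim; auto. intros; apply Rmult_le_pos. lra. apply wa_nonneg.
      apply isum_scal; auto.
    - rewrite (ss_eq _ _ Hl). auto. }
  assert (H1 := psum_ge_last B (2 * i) HB0).
  assert (H2 := psum_le_lim B _ (2 * i) HB0 HBs).
  rewrite F_i. fold (Bf i a z). fold B.
  replace (B (2 * i)%nat) with (a (2 * i)%nat * z (2 * i)%nat) in H1.
  lra. unfold B, Bf. replace (i <=? 2 * i)%nat with true by (symmetry; apply Nat.leb_le; lia). auto.
Qed.

Lemma S_Fcont i a A y0 y : Setup i a A y0 y -> cont_nonneg (fun t => F i a (y t) i).
Proof. intros (_&_&_&_&_&_&_&_&_&H). apply H. Qed.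

Theorem proposition2p3 (i : nat) (a : nat -> R) (A : R)
  (y0 : nat -> R) (y : R -> nat -> R) :
  (1 <= i)%nat ->
  0 < A ->
  (forall j, (1 <= j)%nat -> 0 < a j /\ a j <= A * INR j) ->
  X1i_pos i y0 ->
  0 < y0 i ->
  is_solution i a y0 y ->
  exists (ts ts1 : option R),
    (match ts with Some s => 0 < s | None => True end) /\
    ext_le ts ts1 /\
    (forall t, 0 <= t -> before ts t -> 0 < y t i) /\
    (forall s, ts = Some s -> y s i = 0) /\
    (forall t, 0 < t -> before ts t ->
       forall k, (2 <= k)%nat -> 0 < y t (k * i)%nat) /\
    (forall t, 0 <= t -> before ts t ->
       forall j, (i + 1 <= j)%nat -> 0 <= y t j) /\
    (forall t, 0 <= t -> before ts t ->
       forall j, (i + 1 <= j)%nat -> 0 < y0 j -> 0 < y t j) /\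
    (forall t, 0 <= t -> before ts1 t -> F i a (y t) i < 0) /\
    (forall t, 0 <= t -> before ts t -> norm11 (y t) = norm11 y0) /\
    (forall s, ts = Some s ->
       before ts1 s /\
       (forall k, (2 <= k)%nat -> 0 < y s (k * i)%nat) /\
       (forall j, (i + 1 <= j)%nat -> 0 <= y s j) /\
       (forall j, (i + 1 <= j)%nat -> 0 < y0 j -> 0 < y s j) /\
       norm11 (y s) = norm11 y0).
Proof.
  intros Hi1 HA Ha Hy0 Hy0i Hsol.
  assert (HS : Setup i a A y0 y) by exact (conj Hi1 (conj HA (conj Ha (conj Hy0 (conj Hy0i Hsol))))).
  set (E := fun s => 0 <= s /\ forall u, 0 <= u <= s -> 0 < y u i).
  assert (HE0 : E 0).
  { split. lra. intros u Hu. replace u with 0 by lra. rewrite (S_y0 i a A y0 y HS). auto. }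
  assert (Hai : 0 < a i) by (apply Ha; auto).
  assert (Ha2i : 0 < a (2 * i)%nat) by (apply Ha; lia).
  destruct (classic (exists Mb, forall s, E s -> s <= Mb)) as [[Mb HMb]|Hunb].
  -
    destruct (completeness E (ex_intro _ Mb HMb) (ex_intro _ 0 HE0)) as [c [Hub Hlub]].
    assert (c1 : forall u, 0 <= u < c -> 0 < y u i).
    { intros u Hu. apply NNPP. intro Hn. assert (c <= u).
      { apply Hlub. intros s [Hs0 Hs]. apply Rnot_lt_le. intro Hsu. apply Hn. apply Hs. lra. }
      lra. }
    assert (c2 : 0 < c).
    { destruct (S_cont i a A y0 y i 0 HS ltac:(lra) (y0 i) Hy0i) as [d [Hd Hc]].
      assert (E (d/2)).
      { split. lra. intros u Hu. specialize (Hc u ltac:(lra) ltac:(rewrite Rminus_0_r, Rabs_right; lra)).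
        rewrite (S_y0 i a A y0 y HS) in Hc. apply Rabs_def2 in Hc. lra. }
      assert (d/2 <= c) by (apply Hub; auto). lra. }
    assert (c3 : y c i = 0).
    { apply Rle_antisym.
      - apply Rnot_lt_le. intro Hp.
        destruct (S_cont i a A y0 y i c HS ltac:(lra) (y c i) Hp) as [d [Hd Hc]].
        assert (E (c + d/2)).
        { split. lra. intros u Hu. destruct (Rlt_le_dec u c). apply c1; lra.
          specialize (Hc u ltac:(lra) ltac:(apply Rabs_def1; lra)). apply Rabs_def2 in Hc. lra. }
        assert (c + d/2 <= c) by (apply Hub; auto). lra.
      - apply Rnot_lt_le. intro Hn.
        destruct (S_cont i a A y0 y i c HS ltac:(lra) (- y c i) ltac:(lra)) as [d [Hd Hc]].
        set (u := Rmax 0 (c - d/2)).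
        assert (Hu1 : 0 <= u) by apply Rmax_l. assert (Hu2 : c - d/2 <= u) by apply Rmax_r.
        assert (Hu3 : u < c) by (unfold u; apply Rmax_lub_lt; lra).
        specialize (Hc u Hu1 ltac:(apply Rabs_def1; lra)). apply Rabs_def2 in Hc.
        specialize (c1 u ltac:(lra)). lra. }
    assert (Hnni : forall u, 0 <= u <= c -> 0 <= y u i).
    { intros u Hu. destruct (Rlt_le_dec u c). left; apply c1; lra. replace u with c by lra. lra. }
    assert (Hnn : forall u, 0 <= u <= c -> forall k, 0 <= y u k)
      by (intros u Hu k; apply (POS i a A y0 y c HS Hnni); auto).
    assert (HFc : F i a (y c) i < 0).
    { assert (H := FN i a A y0 y c HS ltac:(lra) (Hnn c ltac:(lra))).
      assert (0 < y c (2 * i)%nat) by (apply (POS3 i a A y0 y c HS Hnni c1 2%nat (le_n 2)); lra).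
      rewrite c3 in H. nra. }
    destruct (S_Fcont i a A y0 y HS c ltac:(lra) (- F i a (y c) i) ltac:(lra)) as [d [Hd Hcf]].
    exists (Some c), (Some (c + d/2)). simpl.
    split; [lra|]. split; [lra|]. split; [intros; apply c1; lra|].
    split; [intros s Hs; injection Hs as <-; auto|].
    split; [intros t Ht Htc k Hk; apply (POS3 i a A y0 y c HS Hnni c1 k Hk); lra|].
    split; [intros t Ht Htc j Hj; apply Hnn; lra|].
    split; [intros t Ht Htc j Hj Hj0; apply (POS2 i a A y0 y c HS Hnni); auto; lia || lra|].
    split.
    { intros t Ht Htc. destruct (Rlt_le_dec t c) as [Hlt|Hge].
      - assert (H := FN i a A y0 y t HS Ht (Hnn t ltac:(lra))).
        assert (0 < y t i) by (apply c1; lra).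
        assert (0 <= y t (2 * i)%nat) by (apply Hnn; lra). nra.
      - specialize (Hcf t Ht ltac:(apply Rabs_def1; lra)). apply Rabs_def2 in Hcf. lra. }
    split; [intros t Ht Htc; apply (Mass i a A y0 y t HS Ht); intros; apply Hnni; lra|].
    intros s Hs. injection Hs as <-.
    split; [lra|]. split; [intros k Hk; apply (POS3 i a A y0 y c HS Hnni c1 k Hk); lra|].
    split; [intros j Hj; apply Hnn; lra|].
    split; [intros j Hj Hj0; apply (POS2 i a A y0 y c HS Hnni); auto; lia || lra|].
    apply (Mass i a A y0 y c HS ltac:(lra) Hnni).
  -
    assert (Hall : forall t, 0 <= t -> 0 < y t i).
    { intros t Ht. apply NNPP. intro Hn. apply Hunb. exists t. intros s [Hs0 Hs].
      apply Rnot_lt_le. intro Hts. apply Hn. apply Hs. lra. }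
    assert (Hnni : forall T u, 0 <= u <= T -> 0 <= y u i) by (intros; left; apply Hall; lra).
    assert (Hnn : forall u, 0 <= u -> forall k, 0 <= y u k)
      by (intros u Hu k; apply (POS i a A y0 y u HS (Hnni u) k u); lra).
    exists None, None. simpl.
    split; auto. split; auto. split; [intros; apply Hall; auto|].
    split; [intros s Hs; discriminate|].
    split; [intros t Ht _ k Hk; apply (POS3 i a A y0 y t HS (Hnni t)); auto; try lra;
            intros; apply Hall; lra|].
    split; [intros t Ht _ j Hj; apply Hnn; auto|].
    split; [intros t Ht _ j Hj Hj0; apply (POS2 i a A y0 y t HS (Hnni t)); auto; lia || lra|].
    split.
    { intros t Ht _. assert (H := FN i a A y0 y t HS Ht (Hnn t Ht)).
      assert (0 < y t i) by (apply Hall; lra).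
      assert (0 <= y t (2 * i)%nat) by (apply Hnn; lra). nra. }
    split; [intros t Ht _; apply (Mass i a A y0 y t HS Ht (Hnni t))|].
    intros s Hs; discriminate.
Qed.
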